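(* Let $X$ be a complex Banach space. Suppose that for every normalized weakly null sequence $(y_n)$ in $X$ there exist a subsequence $(y_{n_k})$ and a sequence $(f_k)$ in $X^*$ biorthogonal to it (i.e. $f_k(y_{n_j})=\delta_{kj}$) such that $(f_k)$ has an (unconditional) spreading model satisfying an upper $p$-estimate for some $p>1$. Then $X$ is $\mathcal{P}$-Schur. If moreover the same $p>1$ works for every such sequence and $N>p'=p/(p-1)$ is an integer, then $X$ is $\mathcal{P}_N$-Schur.
   Context: An $N$-homogeneous analytic polynomial on $X$ is the restriction to the diagonal of a bounded $N$-linear form on $X^N$; $\mathcal{P}_N(X)$ denotes the space of these. $X$ is $\mathcal{P}_N$-Schur if $P(x_n)\to0$ for all $P\in\mathcal{P}_N(X)$ implies $\|x_n\|\to0$; $X$ is $\mathcal{P}$-Schur if $P(x_n)\to 0$ for all $P\in\mathcal{P}_M(X)$ and all $M\ge1$ implies $\|x_n\|\to0$. A sequence $(f_k)$ in a Banach space has a spreading model given by a norm $L$ on the space of finitely supported scalar sequences if for every $\varepsilon>0$ and every finitely supported $a=(a_1,\dots,a_M)$ there is $k$ such that $\left|\,\|\sum_{i=1}^M a_i f_{k_i}\|-L(a)\right|<\varepsilon$ for all $k<k_1<\cdots<k_M$; the spreading model is the completion $F$ of this space under $L$, with unit vectors $e_i$. It is unconditional if $(e_i)$ is an unconditional basis of $F$, and satisfies an upper $p$-estimate if there is $C$ with $L(a)\le C(\sum_i|a_i|^p)^{1/p}$ for all finitely supported $a$. *)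

(* Defs.v *)
From HB Require Import structures.
From mathcomp Require Import all_boot all_order all_algebra.
From mathcomp Require Import all_classical all_reals all_analysis.
From mathcomp Require Import complex.
Set Implicit Arguments. Unset Strict Implicit. Unset Printing Implicit Defensive.
Import Order.TTheory GRing.Theory Num.Theory.
Import numFieldNormedType.Exports.
Local Open Scope ring_scope.
Local Open Scope classical_set_scope.
Local Open Scope complex_scope.

Section Defs.
Variable R : realType.
Notation C := (R[i]).
Variable V : completeNormedModType C.

Definition rnorm (x : V) : R := complex.Re `|x|.
Definition cabs (z : C) : R := complex.Re `|z|.

Definition is_dual (g : V -> C) : Prop :=
  (forall (a : C) (x y : V), g (a *: x + y) = a * g x + g y) /\
  (exists M : R, forall x, cabs (g x) <= M * rnorm x).

Definition dnorm (g : V -> C) : R :=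
  sup [set cabs (g x) | x in [set x : V | rnorm x <= 1]].

Definition weakly_null (y : nat -> V) : Prop :=
  forall g, is_dual g -> (fun n => cabs (g (y n))) @ \oo --> (0 : R).

Definition normalized (y : nat -> V) : Prop := forall n, rnorm (y n) = 1.

Definition upd N (x : 'I_N -> V) (i : 'I_N) (v : V) : 'I_N -> V :=
  fun j => if j == i then v else x j.

Definition is_bdd_multilinear N (A : ('I_N -> V) -> C) : Prop :=
  (forall (x : 'I_N -> V) (i : 'I_N) (a : C) (v w : V),
      A (upd x i (a *: v + w)) = a * A (upd x i v) + A (upd x i w)) /\
  (exists M : R, forall x, cabs (A x) <= M * \prod_(i < N) rnorm (x i)).

Definition is_hom_poly N (P : V -> C) : Prop :=
  exists A : ('I_N -> V) -> C, is_bdd_multilinear A /\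
    forall x, P x = A (fun _ => x).

Definition PN_Schur N : Prop :=
  forall x : nat -> V,
    (forall P, is_hom_poly N P -> (fun n => cabs (P (x n))) @ \oo --> (0 : R)) ->
    (fun n => rnorm (x n)) @ \oo --> (0 : R).

Definition P_Schur : Prop :=
  forall x : nat -> V,
    (forall M P, (1 <= M)%N -> is_hom_poly M P -> (fun n => cabs (P (x n))) @ \oo --> (0 : R)) ->
    (fun n => rnorm (x n)) @ \oo --> (0 : R).

Definition fin_supp (a : nat -> C) : Prop := exists M, forall i, (M <= i)%N -> a i = 0.

Definition is_fs_norm (L : (nat -> C) -> R) : Prop :=
  (forall a, fin_supp a -> 0 <= L a) /\
  (forall a, fin_supp a -> L a = 0 -> forall i, a i = 0) /\
  (forall (c : C) a, fin_supp a -> L (fun i => c * a i) = cabs c * L a) /\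
  (forall a b, fin_supp a -> fin_supp b -> L (fun i => a i + b i) <= L a + L b).

Definition spreading_model (f : nat -> V -> C) (L : (nat -> C) -> R) : Prop :=
  is_fs_norm L /\
  forall (M : nat) (a : nat -> C), (forall i, (M <= i)%N -> a i = 0) ->
  forall eps : R, 0 < eps -> exists k : nat,
    forall kk : nat -> nat, (k < kk 0)%N -> (forall i, (i.+1 < M)%N -> (kk i < kk i.+1)%N) ->
      `| dnorm (fun x => \sum_(i < M) a i * f (kk i) x) - L a | < eps.

(* the unit vectors (e_i) form an unconditional basis of the completion F *)
Definition sm_unconditional (L : (nat -> C) -> R) : Prop :=
  exists K : R, forall (a : nat -> C) (s : nat -> bool), fin_supp a ->
    L (fun i => (if s i then -1 else 1) * a i) <= K * L a.

Definition sm_upper_est (L : (nat -> C) -> R) (p : R) : Prop :=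
  exists K : R, forall (M : nat) (a : nat -> C), (forall i, (M <= i)%N -> a i = 0) ->
    L a <= K * powR (\sum_(i < M) powR (cabs (a i)) p) p^-1.

Definition good_dual_seq (y : nat -> V) (p : R) : Prop :=
  exists nk : nat -> nat, (forall k, (nk k < nk k.+1)%N) /\
  exists f : nat -> V -> C, (forall k, is_dual (f k)) /\
    (forall k j, f k (y (nk j)) = (k == j)%:R) /\
    exists L, spreading_model f L /\ sm_unconditional L /\ sm_upper_est L p.

End Defs.

(* Main.v *)
Require Import Defs.
From HB Require Import structures.
From mathcomp Require Import all_boot all_order all_algebra.
From mathcomp Require Import all_classical all_reals all_analysis.
From mathcomp Require Import complex.
From mathcomp Require Import ring lra.
From mathcomp Require Import zify.
Set Implicit Arguments. Unset Strict Implicit. Unset Printing Implicit Defensive.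
Import Order.TTheory GRing.Theory Num.Theory.
Import numFieldNormedType.Exports.
Local Open Scope ring_scope.
Local Open Scope complex_scope.

Lemma sqr_normr (R : realDomainType) (x : R) : `|x| ^+ 2 = x ^+ 2.
Proof. exact: real_normK (num_real x). Qed.

Section Basic.
Variable R : realType.
Local Notation C := (R[i]).
Variable V : completeNormedModType C.

Lemma normCE (z : C) : `|z| = (cabs z)%:C.
Proof. by rewrite /cabs normc_def. Qed.

Lemma cabsE (z : C) : cabs z = Num.sqrt (complex.Re z ^+ 2 + complex.Im z ^+ 2).
Proof. by rewrite /cabs normc_def. Qed.

Lemma cabs_ge0 (z : C) : 0 <= cabs z.
Proof. by rewrite -lecR -normCE normr_ge0. Qed.

Lemma cabsM (z w : C) : cabs (z * w) = cabs z * cabs w.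
Proof. by apply: complexI; rewrite rmorphM /= -!normCE normrM. Qed.

Lemma cabsD (z w : C) : cabs (z + w) <= cabs z + cabs w.
Proof. by rewrite -lecR rmorphD /= -!normCE ler_normD. Qed.

Lemma cabsN (z : C) : cabs (- z) = cabs z.
Proof. by apply: complexI; rewrite -!normCE normrN. Qed.

Lemma cabs0 : cabs (0 : C) = 0.
Proof. by apply: complexI; rewrite -!normCE normr0. Qed.

Lemma cabs1 : cabs (1 : C) = 1.
Proof. by apply: complexI; rewrite -!normCE normr1. Qed.

Lemma cabsR (a : R) : cabs (a%:C) = `|a|.
Proof. by rewrite cabsE /= expr0n addr0 sqrtr_sqr. Qed.

Lemma cabs_Re (z : C) : `|complex.Re z| <= cabs z.
Proof. by rewrite -lecR -normCE normc_ge_Re. Qed.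

Lemma cabs_Im (z : C) : `|complex.Im z| <= cabs z.
Proof.
rewrite cabsE -sqrtr_sqr ler_sqrt; last by rewrite addr_ge0 // sqr_ge0.
by rewrite lerDr sqr_ge0.
Qed.

Lemma cabs_le_ReIm (z : C) : cabs z <= `|complex.Re z| + `|complex.Im z|.
Proof.
have h : 0 <= `|complex.Re z| + `|complex.Im z| by rewrite addr_ge0.
rewrite cabsE -(ger0_norm h) -sqrtr_sqr ler_sqrt; last by rewrite sqr_ge0.
rewrite sqrrD !sqr_normr lerD2r -[X in X <= _]addr0 lerD2l.
by rewrite mulrn_wge0 // mulr_ge0.
Qed.

Lemma cabs_sum (I : Type) (r : seq I) (P : pred I) (F : I -> C) :
  cabs (\sum_(i <- r | P i) F i) <= \sum_(i <- r | P i) cabs (F i).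
Proof.
elim/big_rec2: _ => [|i y z _ Hy]; first by rewrite cabs0.
by apply: le_trans (cabsD _ _) _; rewrite lerD2l.
Qed.

Lemma cabs_prod (I : Type) (r : seq I) (P : pred I) (F : I -> C) :
  cabs (\prod_(i <- r | P i) F i) = \prod_(i <- r | P i) cabs (F i).
Proof.
elim/big_rec2: _ => [|i y z _ Hy]; first by rewrite cabs1.
by rewrite cabsM Hy.
Qed.

Lemma normVE (x : V) : `|x| = (rnorm x)%:C.
Proof.
rewrite /rnorm RRe_real //; exact: normr_real.
Qed.

Lemma rnorm_ge0 (x : V) : 0 <= rnorm x.
Proof. by rewrite -lecR -normVE normr_ge0. Qed.

Lemma rnormZ (a : C) (x : V) : rnorm (a *: x) = cabs a * rnorm x.
Proof. by apply: complexI; rewrite rmorphM /= -!normVE -normCE normrZ. Qed.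

Lemma rnormD (x y : V) : rnorm (x + y) <= rnorm x + rnorm y.
Proof. by rewrite -lecR rmorphD /= -!normVE ler_normD. Qed.

Lemma rnorm_eq0 (x : V) : rnorm x = 0 -> x = 0.
Proof. by move=> h; apply/normr0_eq0; rewrite normVE h. Qed.

Lemma rnorm0 : rnorm (0 : V) = 0.
Proof. by apply: complexI; rewrite -normVE normr0. Qed.

End Basic.

Section Dual.
Variable R : realType.
Local Notation C := (R[i]).
Variable V : completeNormedModType C.

Lemma dual0 (g : V -> C) : is_dual g -> g 0 = 0.
Proof.
case=> lin _; have := lin 1 0 0; rewrite scaler0 addr0 mul1r => h.
by move: (congr1 (fun z => z - g 0) h); rewrite /= subrr addrK.
Qed.

Lemma dualZ (g : V -> C) a x : is_dual g -> g (a *: x) = a * g x.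
Proof. by move=> gd; have := gd.1 a x 0; rewrite addr0 dual0 // addr0. Qed.

Lemma dualD (g : V -> C) x y : is_dual g -> g (x + y) = g x + g y.
Proof. by move=> gd; have := gd.1 1 x y; rewrite scale1r mul1r. Qed.

Lemma dual_bound (g : V -> C) : is_dual g ->
  exists M : R, 0 <= M /\ forall x, cabs (g x) <= M * rnorm x.
Proof.
case=> _ [M hM]; exists `|M|; split => // x.
apply: le_trans (hM x) _; apply: ler_wpM2r; [exact: rnorm_ge0|exact: ler_norm].
Qed.

Lemma dual_sum (f : nat -> V -> C) (a : nat -> C) (kk : nat -> nat) m :
  (forall k, is_dual (f k)) ->
  is_dual (fun x => \sum_(i < m) a i * f (kk i) x).
Proof.
move=> fd; elim: m => [|m [lin [M hM]]].
  split; first by move=> *; rewrite !big_ord0 mulr0 addr0.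
  by exists 0 => x; rewrite big_ord0 cabs0 mul0r.
have [M' [M'0 hM']] := dual_bound (fd (kk m)).
split.
  move=> b x y; rewrite !big_ord_recr /= lin.
  rewrite (dualD _ _ (fd (kk m))) (dualZ _ _ (fd (kk m))); ring.
exists (M + cabs (a m) * M') => x; rewrite big_ord_recr /=.
apply: le_trans (cabsD _ _) _; rewrite mulrDl; apply: lerD => //.
rewrite cabsM -mulrA; apply: ler_wpM2l; [exact: cabs_ge0|exact: hM'].
Qed.

Lemma dual_le_dnorm (g : V -> C) x : is_dual g -> rnorm x <= 1 -> cabs (g x) <= dnorm g.
Proof.
move=> gd hx; have [M [M0 hM]] := dual_bound gd.
apply: sup_upper_bound; last by exists x.
split; first by exists (cabs (g 0)), 0 => //=; rewrite rnorm0 ler01.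
exists M => _ [y hy <-]; apply: le_trans (hM y) _.
by rewrite -[X in _ <= X]mulr1 ler_wpM2l.
Qed.

End Dual.

Section Thr.
Variable R : realType.
Local Notation C := (R[i]).
Variable V : completeNormedModType C.

Lemma ReD (x y : C) : complex.Re (x + y) = complex.Re x + complex.Re y.
Proof. by case: x; case: y. Qed.
Lemma ImD (x y : C) : complex.Im (x + y) = complex.Im x + complex.Im y.
Proof. by case: x; case: y. Qed.
Lemma Re_sum (I : Type) (r : seq I) (F : I -> C) :
  complex.Re (\sum_(i <- r) F i) = \sum_(i <- r) complex.Re (F i).
Proof. by elim/big_rec2: _ => // i y z _ <-; rewrite ReD. Qed.
Lemma Im_sum (I : Type) (r : seq I) (F : I -> C) :
  complex.Im (\sum_(i <- r) F i) = \sum_(i <- r) complex.Im (F i).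
Proof. by elim/big_rec2: _ => // i y z _ <-; rewrite ImD. Qed.

Definition sgnC (b : bool) : C := if b then -1 else 1.

Lemma Re_sgn (z : C) : complex.Re (sgnC (complex.Re z < 0) * z) = `|complex.Re z|.
Proof.
rewrite /sgnC; case: ltP => h.
  by rewrite mulN1r ltr0_norm //; case: z h.
by rewrite mul1r ger0_norm.
Qed.

Lemma Im_sgn (z : C) : complex.Im (sgnC (complex.Im z < 0) * z) = `|complex.Im z|.
Proof.
rewrite /sgnC; case: ltP => h.
  by rewrite mulN1r ltr0_norm //; case: z h.
by rewrite mul1r ger0_norm.
Qed.

Lemma cabs_sgn b : cabs (sgnC b) = 1.
Proof. by rewrite /sgnC; case: b; rewrite ?cabsN cabs1. Qed.

Definition sgnseq m (s : {ffun 'I_m -> bool}) (i : nat) : C :=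
  oapp (fun j => sgnC (s j)) 0 (insub i).

Lemma sm_threshold (f : nat -> V -> C) L p :
  (forall k, is_dual (f k)) -> spreading_model f L -> sm_upper_est L p ->
  exists K : R, 0 <= K /\ forall m, exists T : nat, forall kk : nat -> nat,
   (T < kk 0)%N -> (forall i, (i.+1 < m)%N -> (kk i < kk i.+1)%N) ->
   forall u, rnorm u <= 1 ->
   \sum_(i < m) cabs (f (kk i) u) <= 2 * (K * powR m%:R p^-1 + 1).
Proof.
move=> fd [_ sm] [K hK]; exists `|K|; split => // m.
have supp (s : {ffun 'I_m -> bool}) : forall i, (m <= i)%N -> sgnseq s i = 0.
  by move=> i hi; rewrite /sgnseq insubN // -leqNgt hi.
have /choice [ks hks] : forall s : {ffun 'I_m -> bool}, exists k : nat,
    forall kk : nat -> nat, (k < kk 0)%N ->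
      (forall i, (i.+1 < m)%N -> (kk i < kk i.+1)%N) ->
      `| dnorm (fun x => \sum_(i < m) sgnseq s i * f (kk i) x) - L (sgnseq s) | < 1.
  move=> s; exact: (sm m (sgnseq s) (supp s) 1 ltr01).
exists (\max_(s : {ffun 'I_m -> bool}) ks s)%N => kk hkk hinc u hu.
have bnd (s : {ffun 'I_m -> bool}) : cabs (\sum_(i < m) sgnseq s i * f (kk i) u) <= `|K| * powR m%:R p^-1 + 1.
  have h1 := hks s kk (leq_ltn_trans (leq_bigmax s) hkk) hinc.
  apply: le_trans (dual_le_dnorm (@dual_sum R V f (sgnseq s) kk m fd) hu) _.
  have h2 : L (sgnseq s) <= `|K| * powR m%:R p^-1.
    apply: le_trans (hK m _ (supp s)) _.
    have -> : \sum_(i < m) powR (cabs (sgnseq s i)) p = m%:R.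
      transitivity (\sum_(i < m) (1 : R)); last by rewrite sumr_const card_ord.
      apply: eq_bigr => i _; rewrite /sgnseq (valK i) /=.
      by rewrite cabs_sgn powR1.
    by apply: ler_wpM2r; [exact: powR_ge0|exact: ler_norm].
  move: h1; rewrite ltr_norml => /andP [_ h1]; lra.
pose b i := f (kk i) u.
pose s1 := [ffun j : 'I_m => complex.Re (b j) < 0].
pose s2 := [ffun j : 'I_m => complex.Im (b j) < 0].
have e1 : \sum_(i < m) `|complex.Re (b i)| =
    complex.Re (\sum_(i < m) sgnseq s1 i * f (kk i) u).
  rewrite Re_sum; apply: eq_bigr => i _.
  by rewrite /sgnseq (valK i) /= ffunE -Re_sgn /b; congr (complex.Re (sgnC (_ < 0) * _)); congr (f (kk _) u); apply: val_inj.
have e2 : \sum_(i < m) `|complex.Im (b i)| =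
    complex.Im (\sum_(i < m) sgnseq s2 i * f (kk i) u).
  rewrite Im_sum; apply: eq_bigr => i _.
  by rewrite /sgnseq (valK i) /= ffunE -Im_sgn /b; congr (complex.Im (sgnC (_ < 0) * _)); congr (f (kk _) u); apply: val_inj.
apply: (@le_trans _ _ (\sum_(i < m) (`|complex.Re (b i)| + `|complex.Im (b i)|))).
  by apply: ler_sum => i _; exact: cabs_le_ReIm.
rewrite big_split /= e1 e2 mulrDl mul1r.
apply: lerD; [apply: le_trans (ler_norm _) _; apply: le_trans (cabs_Re _) (bnd s1)
             |apply: le_trans (ler_norm _) _; apply: le_trans (cabs_Im _) (bnd s2)].
Qed.

End Thr.

Section Real.
Variable R : realType.

Lemma weak_bound (p m t C0 : R) : 1 < p -> 1 <= m -> 0 < t ->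
  m * t <= C0 * powR m p^-1 -> m <= powR (C0 / t) (p / (p - 1)).
Proof.
move=> p1 m1 t0 h.
have m0 : 0 < m by apply: lt_le_trans m1.
have pm0 : 0 < powR m p^-1 by apply: powR_gt0.
have e1 : m = powR m p^-1 * powR m (1 - p^-1).
  rewrite -powRD; last by rewrite (gt_eqF m0) implybT.
  by rewrite addrC subrK powRr1 // ltW.
have h2 : powR m (1 - p^-1) <= C0 / t.
  rewrite ler_pdivlMr //; rewrite {1}e1 in h.
  have h3 : powR m p^-1 * (powR m (1 - p^-1) * t) <= powR m p^-1 * C0.
    by rewrite mulrA [_ * C0]mulrC.
  by rewrite ler_pM2l // in h3.
have e2 : m = powR (powR m (1 - p^-1)) (p / (p - 1)).
  rewrite -powRrM.
  have -> : (1 - p^-1) * (p / (p - 1)) = 1.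
    have p0 : p != 0 by rewrite gt_eqF // (lt_trans ltr01).
    have p10 : p - 1 != 0 by rewrite subr_eq0 gt_eqF.
    by field; rewrite p0 p10.
  by rewrite powRr1 // ltW.
rewrite [X in X <= _]e2; apply: ge0_ler_powR => //.
- by apply: divr_ge0; [apply: ltW; apply: lt_trans p1|rewrite subr_ge0 ltW].
- by rewrite nnegrE powR_ge0.
- by rewrite nnegrE; apply: le_trans h2; apply: powR_ge0.
Qed.

Lemma geom_bound (r : R) (n : nat) : 0 <= r < 1 ->
  \sum_(l < n) r ^+ l <= (1 - r)^-1.
Proof.
case/andP=> r0 r1.
have e : (\sum_(l < n) r ^+ l) * (1 - r) = 1 - r ^+ n.
  elim: n => [|n IH]; first by rewrite big_ord0 expr0 mul0r subrr.
  by rewrite big_ord_recr /= mulrDl IH exprS; ring.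
have pos : 0 < 1 - r by rewrite subr_gt0.
rewrite -(ler_pM2r pos) e mulVf ?gt_eqF //.
by rewrite lerBlDr lerDl exprn_ge0.
Qed.

Lemma sum_ge_const (I : eqType) (s : seq I) (F : I -> R) (t : R) :
  (forall i, i \in s -> t <= F i) -> (size s)%:R * t <= \sum_(i <- s) F i.
Proof.
elim: s => [|x s IH] h; first by rewrite big_nil mul0r.
rewrite big_cons /= -addn1 natrD mulrDl addrC mul1r; apply: lerD.
  by apply: h; rewrite inE eqxx.
by apply: IH => i hi; apply: h; rewrite inE hi orbT.
Qed.

Definition ind (b : bool) : R := if b then 1 else 0.

Lemma layer (C0 x : R) (N : nat) : 0 <= x <= C0 -> forall L : nat,
  x ^+ N <= \sum_(l < L) (ind (C0 * 2^-1 ^+ l.+1 < x) * (C0 * 2^-1 ^+ l) ^+ N)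
            + (if x <= C0 * 2^-1 ^+ L then x ^+ N else 0).
Proof.
case/andP=> x0 xC; elim => [|L IH].
  by rewrite big_ord0 add0r expr0 mulr1 xC.
apply: le_trans IH _; rewrite big_ord_recr /= -addrA lerD2l.
have h2 : 0 <= C0 * 2^-1 ^+ L by apply: mulr_ge0; [apply: le_trans xC|apply: exprn_ge0].
case: (leP x (C0 * 2^-1 ^+ L)) => hL; last first.
  rewrite (_ : (x <= _) = false); last first.
    apply/negbTE; rewrite -ltNge; apply: le_lt_trans hL.
    by rewrite exprSr mulrA ler_piMr //; lra.
  rewrite addr0; apply: mulr_ge0; first by rewrite /ind; case: ifP.
  exact: exprn_ge0.
case: (leP x (C0 * 2^-1 ^+ L.+1)) => hL1.
  by rewrite /ind mul0r add0r.
by rewrite /ind mul1r addr0; apply: lerXn2r; rewrite ?nnegrE.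
Qed.

End Real.

Lemma count_split (T : Type) (P Q : pred T) (s : seq T) :
  (count P s <= count (fun j => P j && Q j) s + count (fun j => ~~ Q j) s)%N.
Proof. by elim: s => //= x s IH; case: (P x); case: (Q x) => /=; lia. Qed.

Lemma count_lt_iota (c a n : nat) : (count (fun j => ~~ (c <= j)) (iota a n) <= c - a)%N.
Proof.
elim: n a => [|n IH] a //=.
by have := IH a.+1; case: ltnP => h /=; lia.
Qed.

Section Schreier.
Variable R : realType.
Local Notation C := (R[i]).
Variable V : completeNormedModType C.
Variable f : nat -> V -> C.
Variables (p K : R) (T : nat -> nat).
Hypothesis K0 : 0 <= K.
Hypothesis hT : forall m (kk : nat -> nat), (T m < kk 0)%N ->
  (forall i, (i.+1 < m)%N -> (kk i < kk i.+1)%N) ->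
  forall u, rnorm u <= 1 ->
  \sum_(i < m) cabs (f (kk i) u) <= 2 * (K * powR m%:R p^-1 + 1).

Definition Tm (j : nat) : nat := (\max_(m < (2 * j).+3) T m)%N.

Fixpoint kseq (j : nat) : nat :=
  match j with 0 => (Tm 0).+1 | j'.+1 => (maxn (kseq j') (Tm j)).+1 end.

Lemma kseq_gt j m : (m <= (2 * j).+2)%N -> (T m < kseq j)%N.
Proof.
move=> hm.
have hm' : (m < (2 * j).+3)%N by [].
have h1 : (T m <= Tm j)%N.
  rewrite /Tm; have := @leq_bigmax _ (fun i : 'I_((2 * j).+3) => T i) (Ordinal hm').
  exact.
clear hm'; case: j hm h1 => [|j] hm h1 /=; first by rewrite ltnS.
by rewrite ltnS (leq_trans h1) // leq_maxr.
Qed.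

Lemma kseq_inc j : (kseq j < kseq j.+1)%N.
Proof. by rewrite /= ltnS leq_maxl. Qed.

Lemma kseq_mono i j : (i < j)%N -> (kseq i < kseq j)%N.
Proof.
elim: j => // j IH; rewrite ltnS leq_eqVlt => /orP [/eqP ->|h].
  exact: kseq_inc.
exact: ltn_trans (IH h) (kseq_inc j).
Qed.

Lemma schreier (s : seq nat) u : sorted ltn s ->
  (forall j, j \in s -> (size s <= (2 * j).+2)%N) -> rnorm u <= 1 ->
  \sum_(j <- s) cabs (f (kseq j) u) <= 2 * (K * powR (size s)%:R p^-1 + 1).
Proof.
move=> ss hs hu.
case: s ss hs => [|j0 s'] ss hs.
  rewrite big_nil; apply: mulr_ge0 => //; apply: addr_ge0 => //.
  by apply: mulr_ge0 => //; apply: powR_ge0.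
set s := j0 :: s' in ss hs *.
rewrite (big_nth 0) big_mkord.
apply: (hT (kk := fun i => kseq (nth 0 s i))) => //.
  by apply: kseq_gt; apply: hs; rewrite inE eqxx.
move=> i hi; apply: kseq_mono.
apply: (sorted_ltn_nth ltn_trans 0 ss) => //; rewrite inE //.
exact: ltn_trans hi.
Qed.

Lemma pointwise j u : rnorm u <= 1 -> cabs (f (kseq j) u) <= 2 * (K + 1).
Proof.
move=> hu.
have := @schreier [:: j] u isT _ hu.
rewrite big_seq1 /= powR1 mulr1; apply.
by move=> i; rewrite inE => /eqP ->; lia.
Qed.


Hypothesis p1 : 1 < p.

Lemma sum_ind (P : pred nat) (s : seq nat) :
  \sum_(j <- s) ind R (P j) = (count P s)%:R.
Proof.
elim: s => [|x s IH]; first by rewrite big_nil.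
by rewrite big_cons IH /= natrD /ind; case: (P x); rewrite ?add0r.
Qed.

Lemma weak_count (t : R) u n : 0 < t -> rnorm u <= 1 ->
  (count (fun j => t < cabs (f (kseq j) u)) (iota 0 n))%:R
    <= 2 * powR (2 * (K + 1) / t) (p / (p - 1)).
Proof.
move=> t0 hu.
set P := fun j => t < cabs (f (kseq j) u).
set g := count P (iota 0 n).
set c := (g %/ 2)%N.
set s := [seq j <- iota 0 n | P j && (c <= j)%N].
have hsz : (g <= size s + c)%N.
  rewrite /s size_filter; have := count_split P (fun j => (c <= j)%N) (iota 0 n).
  have := count_lt_iota c 0 n; rewrite subn0 /g; lia.
have hsg : (size s <= g)%N.
  by rewrite /s size_filter /g; apply: sub_count => j /andP [].
have ss : sorted ltn s by apply: sorted_filter; [exact: ltn_trans|exact: iota_ltn_sorted].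
have hs : forall j, j \in s -> (size s <= (2 * j).+2)%N.
  move=> j; rewrite mem_filter => /andP [/andP [_ hj] _].
  move: hsg hj; rewrite /c; lia.
have hsum := @schreier s u ss hs hu.
have hlow : (size s)%:R * t <= \sum_(j <- s) cabs (f (kseq j) u).
  apply: sum_ge_const => j; rewrite mem_filter => /andP [/andP [hj _] _].
  exact: ltW.
have hr : 0 <= 2 * powR (2 * (K + 1) / t) (p / (p - 1)).
  by apply: mulr_ge0 => //; apply: powR_ge0.
case: (posnP (size s)) => hm.
  have -> : g = 0%N by move: hsz; rewrite hm /c; lia.
  by [].
have m1 : (1 : R) <= (size s)%:R by rewrite ler1n.
have pw1 : 1 <= powR (size s)%:R p^-1.
  rewrite -[X in X <= _](powRr0 (size s)%:R); apply: ler_powR => //.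
  by rewrite invr_ge0; apply: ltW; apply: lt_trans p1.
have hm2 : (size s)%:R * t <= 2 * (K + 1) * powR (size s)%:R p^-1.
  apply: (le_trans hlow); apply: (le_trans hsum).
  rewrite -mulrA ler_pM2l // mulrDl mul1r lerD2l //.
have := weak_bound p1 m1 t0 hm2 => hw.
apply: (@le_trans _ _ (2 * (size s)%:R)); last by rewrite ler_pM2l.
rewrite -natrM ler_nat; move: hsz; rewrite /c; lia.
Qed.

Lemma powR_exprn (x q : R) (k : nat) : 0 <= x -> powR (x ^+ k) q = (powR x q) ^+ k.
Proof.
move=> x0; rewrite -powR_mulrn // -powRrM mulrC powRrM powR_mulrn //.
exact: powR_ge0.
Qed.

Lemma sum_pow (N : nat) : p / (p - 1) < N%:R -> exists B0 : R,
  forall u n, rnorm u <= 1 -> \sum_(j < n) cabs (f (kseq j) u) ^+ N <= B0.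
Proof.
move=> hN.
have C00 : 0 < 2 * (K + 1).
  by apply: mulr_gt0 => //; apply: le_lt_trans K0 _; rewrite ltrDl.
have p0 : 0 < p by apply: lt_trans p1.
have q1 : 1 < p / (p - 1).
  by rewrite ltr_pdivlMr ?subr_gt0 // mul1r ltrBlDr ltrDl.
have N1 : (1 <= N)%N.
  by rewrite -(ler_nat R); apply: ltW; apply: lt_trans hN.
have l2 : 0 < ln (2 : R) by apply: ln_gt0; rewrite ltr1n.
set C0 := 2 * (K + 1); set q := p / (p - 1); set h : R := 2^-1.
set w := powR 2 q; set r := h ^+ N * w.
have w0 : 0 <= w by apply: powR_ge0.
have h0 : 0 < h by rewrite /h invr_gt0.
have h1 : h <= 1 by rewrite /h invf_le1 // ler1n.
have r0 : 0 <= r by apply: mulr_ge0 => //; apply: exprn_ge0; apply: ltW.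
have rlt1 : r < 1.
  have -> : r = powR 2 (q - N%:R).
    rewrite /r /w /h exprVn -powR_invn // mulrC -powRD //.
    by rewrite pnatr_eq0 implybT.
  rewrite /powR (negbTE (_ : (2:R) != 0)) ?pnatr_eq0 // -[X in _ < X]expR0 ltr_expR.
  by rewrite -[X in _ < X](mul0r (ln 2)) ltr_pM2r // subr_lt0.
exists (2 * C0 ^+ N * w / (1 - r) + 1) => u n hu.
pose x j := cabs (f (kseq j) u).
have x0 j : 0 <= x j <= C0 by rewrite cabs_ge0 /=; exact: pointwise.
have [L hL] : exists L : nat, n%:R * C0 ^+ N <= 2 ^+ L.
  exists (Num.trunc (n%:R * C0 ^+ N)).+1.
  apply: le_trans (ltW (truncnS_gt _)) _.
  by rewrite -natrX ler_nat; apply: ltnW; apply: ltn_expl.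
have hCL : 0 <= C0 * h ^+ L by apply: mulr_ge0; [apply: ltW|apply: exprn_ge0; apply: ltW].
apply: (@le_trans _ _ (\sum_(j < n) (\sum_(l < L) (ind R (C0 * h ^+ l.+1 < x j) * (C0 * h ^+ l) ^+ N)
            + (if x j <= C0 * h ^+ L then x j ^+ N else 0)))).
  by apply: ler_sum => j _; exact: (@layer R C0 (x j) N (x0 j) L).
rewrite big_split /=; apply: lerD.
  rewrite exchange_big /=.
  apply: (@le_trans _ _ (\sum_(l < L) (2 * C0 ^+ N * w) * r ^+ l)); last first.
    rewrite -mulr_sumr ler_pM2l; last by apply: mulr_gt0; [apply: mulr_gt0; [|apply: exprn_gt0]|apply: powR_gt0].
    by apply: geom_bound; rewrite r0 rlt1.
  apply: ler_sum => l _.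
  rewrite -mulr_suml.
  have hc : \sum_(j < n) ind R (C0 * h ^+ l.+1 < x j) =
      (count (fun j => C0 * h ^+ l.+1 < x j) (iota 0 n))%:R.
    have e : iota 0 n = index_iota 0 n by rewrite /index_iota subn0.
    by rewrite -sum_ind e big_mkord.
  rewrite hc.
  have ht : 0 < C0 * h ^+ l.+1 by apply: mulr_gt0 => //; apply: exprn_gt0.
  apply: (@le_trans _ _ (2 * powR (2 * (K + 1) / (C0 * h ^+ l.+1)) (p / (p - 1)) * (C0 * h ^+ l) ^+ N)).
    apply: ler_wpM2r; first by apply: exprn_ge0; apply: mulr_ge0; [apply: ltW|apply: exprn_ge0; apply: ltW].
    exact: weak_count.
  have -> : 2 * (K + 1) / (C0 * h ^+ l.+1) = 2 ^+ l.+1.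
    by rewrite -/C0 invfM mulrA divff ?gt_eqF // mul1r /h exprVn invrK.
  rewrite -/q powR_exprn // -/w.
  rewrite le_eqVlt; apply/orP; left; apply/eqP.
  rewrite /r !exprMn exprS -!exprM mulnC.
  ring.
have xg j : 0 <= x j by case/andP: (x0 j).
apply: (@le_trans _ _ (\sum_(i < n) (C0 * h ^+ L) ^+ N)).
  apply: ler_sum => i _; case: ifP => hi.
    by apply: lerXn2r; rewrite ?nnegrE ?xg.
  exact: exprn_ge0.
rewrite sumr_const card_ord -mulr_natl.
have hLe : 0 < 2 ^+ L :> R by apply: exprn_gt0.
apply: (@le_trans _ _ (n%:R * (C0 ^+ N * h ^+ L))).
  apply: ler_wpM2l => //; rewrite exprMn; apply: ler_wpM2l; first by apply: exprn_ge0; apply: ltW.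
  rewrite -(prednK N1) exprS; apply: ler_piMr; first by apply: exprn_ge0; apply: ltW.
  by apply: exprn_ile1; [apply: exprn_ge0; apply: ltW|apply: exprn_ile1 => //; apply: ltW].
rewrite /h exprVn mulrA ler_pdivrMr // mul1r.
exact: hL.
Qed.

End Schreier.

Lemma argmax_ex (R : realType) N (a : 'I_N.+1 -> R) : exists i0, forall i, a i <= a i0.
Proof.
elim: N a => [|N IH] a.
  by exists ord0 => i; rewrite (ord1 i).
have [j0 hj0] := IH (fun i => a (lift ord0 i)).
case: (leP (a ord0) (a (lift ord0 j0))) => h.
  exists (lift ord0 j0) => i; case: (unliftP ord0 i) => [j ->|->].
    exact: (hj0 j).
  exact: h.
exists ord0 => i; case: (unliftP ord0 i) => [j ->|->] //.
exact: le_trans (hj0 j) (ltW h).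
Qed.

Lemma prod_le_sum_pow (R : realType) N (a : 'I_N -> R) : (0 < N)%N -> (forall i, 0 <= a i) ->
  \prod_i a i <= \sum_i a i ^+ N.
Proof.
case: N a => // N a _ a0.
have [i0 h] := argmax_ex a.
apply: (@le_trans _ _ (\prod_(i < N.+1) a i0)).
  by apply: ler_prod => i _; rewrite a0 h.
rewrite prodr_const card_ord (bigD1 i0) //= lerDl.
by apply: sumr_ge0 => i _; apply: exprn_ge0.
Qed.

Section Multi.
Variable R : realType.
Local Notation C := (R[i]).
Variable V : completeNormedModType C.

Lemma multi_bound (f : nat -> V -> C) (kk : nat -> nat) (N : nat) (B0 : R) :
  (forall k, is_dual (f k)) -> (0 < N)%N ->
  (forall u n, rnorm u <= 1 -> \sum_(j < n) cabs (f (kk j) u) ^+ N <= B0) ->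
  forall (x : 'I_N -> V) n,
  \sum_(j < n) \prod_(i < N) cabs (f (kk j) (x i)) <= N%:R * B0 * \prod_(i < N) rnorm (x i).
Proof.
move=> fd N0 hB x n.
case: (pselect (exists i, rnorm (x i) = 0)) => [[i0 h0]|hn].
  have x0 : x i0 = 0 by apply: rnorm_eq0.
  rewrite [X in _ <= _ * X](bigD1 i0) //= x0 rnorm0 mul0r mulr0.
  rewrite big1 ?lexx // => j _; rewrite (bigD1 i0) //= x0 dual0 // cabs0 mul0r //.
have pos i : 0 < rnorm (x i).
  rewrite lt_neqAle rnorm_ge0 andbT eq_sym; apply/eqP => h; apply: hn; by exists i.
pose u i := ((rnorm (x i))^-1)%:C *: x i.
have hu i : rnorm (u i) = 1.
  by rewrite /u rnormZ cabsR ger0_norm ?invr_ge0 ?rnorm_ge0 // mulVf ?gt_eqF.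
have hx i : x i = (rnorm (x i))%:C *: u i.
  by rewrite /u scalerA -rmorphM /= divff ?gt_eqF // scale1r.
have e j : \prod_(i < N) cabs (f (kk j) (x i)) =
    \prod_(i < N) rnorm (x i) * \prod_(i < N) cabs (f (kk j) (u i)).
  rewrite -big_split /=; apply: eq_bigr => i _.
  by rewrite {1}hx dualZ // cabsM cabsR ger0_norm ?rnorm_ge0.
under eq_bigr do rewrite e.
rewrite -mulr_sumr mulrC; apply: ler_wpM2r; first by apply: prodr_ge0 => i _; exact: rnorm_ge0.
apply: (@le_trans _ _ (\sum_(j < n) \sum_(i < N) cabs (f (kk j) (u i)) ^+ N)).
  by apply: ler_sum => j _; apply: prod_le_sum_pow => // i; exact: cabs_ge0.
rewrite exchange_big /= mulr_natl -[X in B0 *+ X]card_ord -sumr_const.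
apply: ler_sum => i _.
by apply: hB; rewrite hu.
Qed.

End Multi.

Local Open Scope classical_set_scope.

Section Lim.
Variable R : realType.
Local Notation C := (R[i]).

Definition ReS (s : nat -> C) := fun n => complex.Re (s n).
Definition ImS (s : nat -> C) := fun n => complex.Im (s n).
Definition ccvg (s : nat -> C) := cvgn (ReS s) /\ cvgn (ImS s).
Definition climit (s : nat -> C) : C := (limn (ReS s)) +i* (limn (ImS s)).

Lemma ReM (a z : C) : complex.Re (a * z) = complex.Re a * complex.Re z - complex.Im a * complex.Im z.
Proof. by case: a; case: z. Qed.
Lemma ImM (a z : C) : complex.Im (a * z) = complex.Re a * complex.Im z + complex.Im a * complex.Re z.
Proof. by case: a => ? ?; case: z => ? ? /=; rewrite addrC. Qed.

Lemma real_abs_cvg (t : nat -> R) (B : R) :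
  (forall n, \sum_(j < n) `|t j| <= B) -> cvgn (fun n => \sum_(j < n) t j).
Proof.
move=> hB.
have e : (fun n => \sum_(j < n) t j) = series t.
  by rewrite seriesEord.
rewrite e; apply: normed_cvg; apply: nondecreasing_is_cvgn.
  apply/nondecreasing_seqP => n /=; rewrite seriesEord /= big_ord_recr /= lerDl. exact: normr_ge0.
by exists B => _ [n _ <-] /=; rewrite seriesEord /=; exact: hB.
Qed.

Lemma ccvg_abs (t : nat -> C) (B : R) :
  (forall n, \sum_(j < n) cabs (t j) <= B) -> ccvg (fun n => \sum_(j < n) t j).
Proof.
move=> hB; split.
  have e : ReS (fun n => \sum_(j < n) t j) = (fun n => \sum_(j < n) complex.Re (t j)).
    by apply: funext => n; rewrite /ReS Re_sum.
  rewrite e; apply: (@real_abs_cvg (fun j => complex.Re (t j)) B) => n; apply: le_trans (hB n).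
  by apply: ler_sum => j _; exact: cabs_Re.
have e : ImS (fun n => \sum_(j < n) t j) = (fun n => \sum_(j < n) complex.Im (t j)).
  by apply: funext => n; rewrite /ImS Im_sum.
rewrite e; apply: (@real_abs_cvg (fun j => complex.Im (t j)) B) => n; apply: le_trans (hB n).
by apply: ler_sum => j _; exact: cabs_Im.
Qed.

Lemma climit_near (s : nat -> C) c : (\forall n \near \oo, s n = c) -> climit s = c.
Proof.
move=> h; rewrite /climit.
rewrite (@lim_near_cst _ (@norm_hausdorff R R) _ _ _ (complex.Re c) (ReS s)); last by apply: filterS h => n; rewrite /ReS /ImS => ->.
rewrite (@lim_near_cst _ (@norm_hausdorff R R) _ _ _ (complex.Im c) (ImS s)); last by apply: filterS h => n; rewrite /ReS /ImS => ->.
by case: c {h}.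
Qed.

Lemma climit_lin (a : C) (s1 s2 : nat -> C) : ccvg s1 -> ccvg s2 ->
  climit (fun n => a * s1 n + s2 n) = a * climit s1 + climit s2.
Proof.
move=> [r1 i1] [r2 i2]; rewrite /climit.
have eR : ReS (fun n => a * s1 n + s2 n) =
   (fun n => complex.Re a * ReS s1 n - complex.Im a * ImS s1 n + ReS s2 n).
  by apply: funext => n; rewrite /ReS /ImS ReD ReM.
have eI : ImS (fun n => a * s1 n + s2 n) =
   (fun n => complex.Re a * ImS s1 n + complex.Im a * ReS s1 n + ImS s2 n).
  by apply: funext => n; rewrite /ReS /ImS ImD ImM.
rewrite eR eI.
have cR : (fun n => complex.Re a * ReS s1 n - complex.Im a * ImS s1 n + ReS s2 n) @ \oo -->
   complex.Re a * limn (ReS s1) - complex.Im a * limn (ImS s1) + limn (ReS s2).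
  apply: cvgD => //; apply: cvgB.
    exact: (@cvgMl_tmp _ _ _ _ _ (complex.Re a) _ r1).
  exact: (@cvgMl_tmp _ _ _ _ _ (complex.Im a) _ i1).
have cI : (fun n => complex.Re a * ImS s1 n + complex.Im a * ReS s1 n + ImS s2 n) @ \oo -->
   complex.Re a * limn (ImS s1) + complex.Im a * limn (ReS s1) + limn (ImS s2).
  apply: cvgD => //; apply: cvgD.
    exact: (@cvgMl_tmp _ _ _ _ _ (complex.Re a) _ i1).
  exact: (@cvgMl_tmp _ _ _ _ _ (complex.Im a) _ r1).
rewrite (cvg_lim (@norm_hausdorff R R) cR) (cvg_lim (@norm_hausdorff R R) cI).
by case: a {eR eI cR cI} => ar ai; apply/eqP; rewrite eq_complex /= !eqxx.
Qed.

Lemma climit_bound (s : nat -> C) (B : R) : ccvg s -> (forall n, cabs (s n) <= B) ->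
  cabs (climit s) <= B.
Proof.
move=> [rc ic] hB.
have B0 : 0 <= B by apply: le_trans (hB 0%N); exact: cabs_ge0.
have hc : (ReS s \* ReS s + ImS s \* ImS s) @ \oo -->
    limn (ReS s) * limn (ReS s) + limn (ImS s) * limn (ImS s).
  by apply: cvgD; apply: cvgM.
have hl := cvg_lim (@norm_hausdorff R R) hc.
have le : lim ((ReS s \* ReS s + ImS s \* ImS s) @ \oo) <= B ^+ 2.
  apply: limr_le; first by apply/cvg_ex; eexists; exact: hc.
  apply: nearW => n.
  change (complex.Re (s n) * complex.Re (s n) + complex.Im (s n) * complex.Im (s n) <= B ^+ 2).
  have := hB n; rewrite cabsE => h.
  rewrite -!expr2 -(sqr_sqrtr (addr_ge0 (sqr_ge0 (complex.Re (s n))) (sqr_ge0 (complex.Im (s n))))).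
  by apply: lerXn2r; rewrite ?nnegrE ?sqrtr_ge0.
rewrite hl in le.
by rewrite cabsE /climit /= -(ger0_norm B0) -sqrtr_sqr ler_sqrt ?sqr_ge0 // !expr2.
Qed.

End Lim.

Section Poly.
Variable R : realType.
Local Notation C := (R[i]).
Variable V : completeNormedModType C.

Definition Sx (f : nat -> V -> C) (kk : nat -> nat) N (x : 'I_N -> V) (n : nat) : C :=
  \sum_(j < n) \prod_(i < N) f (kk j) (x i).
Definition Apol f kk N (x : 'I_N -> V) : C := climit (Sx f kk x).

Lemma Sx_ccvg (f : nat -> V -> C) (kk : nat -> nat) (N : nat) (B0 : R) : (forall k, is_dual (f k)) -> (0 < N)%N ->
  (forall u n, rnorm u <= 1 -> \sum_(j < n) cabs (f (kk j) u) ^+ N <= B0) ->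
  forall x : 'I_N -> V, ccvg (Sx f kk x).
Proof.
move=> fd N0 hB x; apply: (@ccvg_abs R (fun j => \prod_(i < N) f (kk j) (x i)) (N%:R * B0 * \prod_(i < N) rnorm (x i))) => n.
under eq_bigr do rewrite cabs_prod.
exact: (multi_bound fd N0 hB x n).
Qed.

Lemma upd_eq N (x : 'I_N -> V) i v : upd x i v i = v.
Proof. by rewrite /upd eqxx. Qed.
Lemma upd_neq N (x : 'I_N -> V) i v j : j != i -> upd x i v j = x j.
Proof. by rewrite /upd => /negbTE ->. Qed.

Lemma Apol_multi (f : nat -> V -> C) (kk : nat -> nat) (N : nat) (B0 : R) : (forall k, is_dual (f k)) -> (0 < N)%N ->
  (forall u n, rnorm u <= 1 -> \sum_(j < n) cabs (f (kk j) u) ^+ N <= B0) ->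
  is_bdd_multilinear (Apol f kk (N:=N)).
Proof.
move=> fd N0 hB; split.
  move=> x i a v w; rewrite /Apol -climit_lin; try exact: Sx_ccvg fd N0 hB _.
  congr climit; apply: funext => n; rewrite /Sx mulr_sumr -big_split /=.
  apply: eq_bigr => j _.
  rewrite (bigD1 i) //= [X in _ = _ * X + _](bigD1 i) //= [X in _ = _ + X](bigD1 i) //=.
  rewrite !upd_eq.
  have e : forall y, \prod_(k < N | k != i) f (kk j) (upd x i y k) = \prod_(k < N | k != i) f (kk j) (x k).
    by move=> y; apply: eq_bigr => k hk; rewrite upd_neq.
  rewrite !e (fd (kk j)).1; ring.
exists (N%:R * B0) => x; rewrite /Apol.
apply: climit_bound; first exact: Sx_ccvg fd N0 hB x.
move=> n; apply: le_trans (cabs_sum _ _ _) _.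
under eq_bigr do rewrite cabs_prod.
exact: (multi_bound fd N0 hB x n).
Qed.

Lemma prod_const_ord N (c : C) : \prod_(i < N) c = c ^+ N.
Proof. by rewrite big_const_ord; elim: N => [|N IH] //=; rewrite IH exprS. Qed.

Lemma Apol_const (f : nat -> V -> C) (kk : nat -> nat) (N : nat) (z : V) (c : C) (j0 : nat) : (0 < N)%N ->
  (forall j, f (kk j) z = if j == j0 then c else 0) ->
  Apol f kk (fun _ : 'I_N => z) = c ^+ N.
Proof.
move=> N0 hz; rewrite /Apol; apply: climit_near.
exists j0.+1 => // n /= hn.
rewrite /Sx (bigD1 (Ordinal hn)) //= [X in _ + X]big1 ?addr0.
  by rewrite prod_const_ord hz eqxx.
move=> j hj; rewrite prod_const_ord hz.
have -> : (nat_of_ord j == j0) = false.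
  by apply/negbTE; apply: contra hj => /eqP h; apply/eqP; apply: val_inj.
by rewrite expr0n; case: N N0.
Qed.

End Poly.

Section Seq.
Variable R : realType.

Lemma nearoo (P : nat -> Prop) : (\forall n \near \oo, P n) <-> exists M, forall n, (M <= n)%N -> P n.
Proof.
split; first by case=> M _ h; exists M => n hn; apply: h.
by case=> M h; exists M => // n; apply: h.
Qed.

Lemma incr_mono (g : nat -> nat) : (forall k, (g k < g k.+1)%N) -> forall i j, (i < j)%N -> (g i < g j)%N.
Proof.
move=> hg i; elim => // j IH; rewrite ltnS leq_eqVlt => /orP [/eqP ->|h].
  exact: hg.
exact: ltn_trans (IH h) (hg j).
Qed.

Lemma incr_ge (g : nat -> nat) : (forall k, (g k < g k.+1)%N) -> forall j, (j <= g j)%N.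
Proof. by move=> hg; elim => // j IH; apply: leq_ltn_trans IH (hg j). Qed.

Lemma cvg0_sub (u : nat -> R) (m : nat -> nat) : u @ \oo --> 0 ->
  (forall j, (m j < m j.+1)%N) -> (fun j => u (m j)) @ \oo --> 0.
Proof.
move=> /cvgr0Pnorm_lt hu hm; apply/cvgr0Pnorm_lt => e e0.
have /nearoo [M hM] := hu e e0; apply/nearoo; exists M => n hn.
by apply: hM; apply: leq_trans hn (incr_ge hm n).
Qed.

Lemma cvg0_le (a b : nat -> R) (K : R) : (forall n, 0 <= a n <= K * b n) ->
  b @ \oo --> 0 -> a @ \oo --> 0.
Proof.
move=> hab /cvgr0Pnorm_lt hb; apply/cvgr0Pnorm_lt => e e0.
have K1 : 0 < `|K| + 1 by rewrite ltr_pwDr.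
have /nearoo [M hM] := hb (e / (`|K| + 1)) (divr_gt0 e0 K1).
apply/nearoo; exists M => n hn; have := hM n hn; have /andP [a0 aK] := hab n.
rewrite ltr_pdivlMr // => hbn.
rewrite ger0_norm //; apply: le_lt_trans aK _.
apply: le_lt_trans (ler_norm _) _; rewrite normrM.
apply: le_lt_trans hbn; rewrite mulrC ler_wpM2l //.
by rewrite lerDl.
Qed.

Lemma cvg0_root (a : nat -> R) (N : nat) : (0 < N)%N -> (forall n, 0 <= a n) ->
  (fun n => a n ^+ N) @ \oo --> 0 -> a @ \oo --> 0.
Proof.
move=> N0 a0 /cvgr0Pnorm_lt ha; apply/cvgr0Pnorm_lt => e e0.
have /nearoo [M hM] := ha (e ^+ N) (exprn_gt0 N e0).
apply/nearoo; exists M => n hn; have := hM n hn.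
rewrite ger0_norm ?exprn_ge0 // ger0_norm //.
move=> h; rewrite ltNge; apply/negP => h2.
have := lerXn2r N (ltW e0 : 0 <= e) (a0 n) h2.
by rewrite leNgt h.
Qed.

Lemma not_cvg0 (u : nat -> R) : ~ (u @ \oo --> 0) ->
  exists2 e : R, 0 < e & forall M, exists n, (M <= n)%N /\ e <= `|u n|.
Proof.
move=> h; apply: contrapT => h2; apply: h; apply/cvgr0Pnorm_lt => e e0.
apply/nearoo; apply: contrapT => h3; apply: h2; exists e => // M.
apply: contrapT => h4; apply: h3; exists M => n hn.
by rewrite ltNge; apply/negP => h5; apply: h4; exists n.
Qed.

Lemma cvg0_not_ge (v : nat -> R) (d : R) : v @ \oo --> 0 -> 0 < d ->
  (forall j, d <= v j) -> False.
Proof.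
move=> /cvgr0Pnorm_lt hv d0 hd; have /nearoo [M hM] := hv d d0.
have := hM M (leqnn M); rewrite ltNge => /negP; apply.
by apply: le_trans (hd M) (ler_norm _).
Qed.

End Seq.

Section Main.
Variable R : realType.
Local Notation C := (R[i]).
Variable V : completeNormedModType C.

Lemma core (y : nat -> V) (p : R) (N : nat) : 1 < p -> p / (p - 1) < N%:R ->
  good_dual_seq y p ->
  exists P : V -> C, is_hom_poly N P /\ exists s : nat -> nat,
    (forall j, (s j < s j.+1)%N) /\ forall j (c : C), P (c *: y (s j)) = c ^+ N.
Proof.
move=> p1 hN [nk [nkinc [f [fd [bio [L [sm [_ ue]]]]]]]].
have [K [K0 hthr]] := sm_threshold fd sm ue.
have /choice [T hT] := hthr.
have [B0 hB] := sum_pow K0 hT p1 hN.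
have N0 : (0 < N)%N.
  rewrite -(ltr0n R); apply: lt_trans hN; apply: divr_gt0.
    by apply: lt_trans p1.
  by rewrite subr_gt0.
exists (fun x => Apol f (kseq T) (fun _ : 'I_N => x)); split.
  exists (@Apol R V f (kseq T) N); split => //. exact (Apol_multi fd N0 hB).
exists (fun j => nk (kseq T j)); split.
  by move=> j; apply: (incr_mono nkinc); exact: kseq_mono (ltnSn j).
move=> j c; apply: (Apol_const (j0 := j)) => // j'.
rewrite dualZ // bio.
case: (eqVneq j' j) => [->|hne]; first by rewrite !eqxx /= mulr1n mulr1.
have -> : (kseq T j' == kseq T j) = false.
  apply/negbTE; case: (ltngtP j' j) hne => [h|h|->]; last by rewrite eqxx.
  - by move=> _; rewrite neq_ltn kseq_mono.
  - by move=> _; rewrite neq_ltn (kseq_mono T h) orbT.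
by rewrite /= mulr0n mulr0.
Qed.

Lemma schur_core (x : nat -> V) (Q : nat -> Prop) :
  (forall g, is_dual g -> (fun n => cabs (g (x n))) @ \oo --> (0 : R)) ->
  (forall y, normalized y -> weakly_null y -> exists N, [/\ Q N, (0 < N)%N &
     exists P : V -> C, is_hom_poly N P /\ exists s : nat -> nat,
       (forall j, (s j < s j.+1)%N) /\ forall j (c : C), P (c *: y (s j)) = c ^+ N]) ->
  (forall N P, Q N -> is_hom_poly N P -> (fun n => cabs (P (x n))) @ \oo --> (0 : R)) ->
  (fun n => rnorm (x n)) @ \oo --> (0 : R).
Proof.
move=> hw hy hP; apply: contrapT => hn.
have [e e0 he] := not_cvg0 hn.
have /choice [g hg] := he.
pose m := fix m j := match j with 0 => g 0%N | j'.+1 => g (m j').+1 end.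
have minc j : (m j < m j.+1)%N by have [h _] := hg (m j).+1.
have hm j : e <= rnorm (x (m j)).
  by case: j => [|j] /=; [have [_ h] := hg 0%N|have [_ h] := hg (m j).+1];
     rewrite ger0_norm ?rnorm_ge0 in h.
pose c j := rnorm (x (m j)).
have cpos j : 0 < c j by apply: lt_le_trans e0 (hm j).
pose y j := ((c j)^-1)%:C *: x (m j).
have ny : normalized y.
  by move=> j; rewrite /y rnormZ cabsR ger0_norm ?invr_ge0 ?(ltW (cpos j)) // mulVf // gt_eqF.
have wy : weakly_null y.
  move=> g' gd; apply: (@cvg0_le R _ (fun j => cabs (g' (x (m j)))) e^-1).
    move=> n; rewrite /y dualZ // cabsM cabsR ger0_norm; last by rewrite invr_ge0 (ltW (cpos n)).
    apply/andP; split; first by apply: mulr_ge0; [rewrite invr_ge0 (ltW (cpos n))|exact: cabs_ge0].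
    apply: ler_wpM2r; first exact: cabs_ge0.
    by rewrite lef_pV2 ?posrE // hm.
  exact: cvg0_sub (hw g' gd) minc.
have [N [QN N0 [P [hPh [s [sinc hs]]]]]] := hy y ny wy.
have hx j : x (m (s j)) = (c (s j))%:C *: y (s j).
  by rewrite /y scalerA -rmorphM /= divff ?gt_eqF // scale1r.
have conv := cvg0_sub (hP N P QN hPh) (fun j => incr_mono minc (sinc j)).
apply: (cvg0_not_ge conv (exprn_gt0 N e0)) => j /=.
rewrite hx hs -rmorphXn cabsR ger0_norm; last by apply: exprn_ge0; apply: ltW.
by apply: lerXn2r; rewrite ?nnegrE ?(ltW e0) ?rnorm_ge0 ?hm.
Qed.

End Main.

Section Fin.
Variable R : realType.
Local Notation C := (R[i]).
Variable V : completeNormedModType C.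

Lemma prod_const_ordR N (c : R) : \prod_(i < N) c = c ^+ N.
Proof. by rewrite big_const_ord; elim: N => [|N IH] //=; rewrite IH exprS. Qed.

Lemma cabsX (z : C) N : cabs (z ^+ N) = cabs z ^+ N.
Proof. by rewrite -prod_const_ord cabs_prod prod_const_ordR. Qed.

Lemma prod_dual_multi (g : V -> C) (N : nat) : is_dual g ->
  is_bdd_multilinear (fun v : 'I_N -> V => \prod_(i < N) g (v i)).
Proof.
move=> gd; split.
  move=> x i a v w.
  rewrite (bigD1 i) //= [X in _ = _ * X + _](bigD1 i) //= [X in _ = _ + X](bigD1 i) //=.
  rewrite !upd_eq.
  have e : forall y, \prod_(k < N | k != i) g (upd x i y k) = \prod_(k < N | k != i) g (x k).
    by move=> y; apply: eq_bigr => k hk; rewrite upd_neq.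
  rewrite !e gd.1; ring.
have [M [M0 hM]] := dual_bound gd.
exists (M ^+ N) => x; rewrite cabs_prod -prod_const_ordR -big_split /=.
apply: ler_prod => i _; rewrite cabs_ge0; exact: hM.
Qed.

Lemma dual_poly1 (g : V -> C) : is_dual g -> is_hom_poly 1 g.
Proof.
move=> gd; exists (fun v : 'I_1 -> V => g (v ord0)); split => //; split.
  by move=> x i a v w; rewrite (ord1 i) !upd_eq gd.1.
have [M [M0 hM]] := dual_bound gd.
by exists M => x; rewrite big_ord1.
Qed.

End Fin.

Close Scope complex_scope.
Close Scope classical_set_scope.

Theorem theorem3p3 (R : realType) (V : completeNormedModType R[i]) :
  ((forall y : nat -> V, normalized y -> weakly_null y ->
      exists p : R, 1 < p /\ good_dual_seq y p) ->
   P_Schur V) /\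
  (forall p : R, 1 < p ->
    (forall y : nat -> V, normalized y -> weakly_null y -> good_dual_seq y p) ->
    forall N : nat, p / (p - 1) < N%:R -> PN_Schur V N).
Proof.
split.
  move=> H x hx; apply: (@schur_core R V x (fun N => (1 <= N)%N)).
  - by move=> g gd; apply: (hx 1%N g) => //; exact: dual_poly1.
  - move=> y ny wy; have [p [p1 gp]] := H y ny wy.
    pose N := (Num.trunc (p / (p - 1))).+1.
    have hN : p / (p - 1) < N%:R by exact: truncnS_gt.
    have [P [hP [s [sinc hs]]]] := core p1 hN gp.
    by exists N; split => //; exists P; split => //; exists s.
  - move=> N P hN hP; exact: (hx N P hN hP).
move=> p p1 H N hN x hx.
have N0 : (0 < N)%N.
  rewrite -(ltr0n R); apply: lt_trans hN; apply: divr_gt0.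
    by apply: lt_trans p1.
  by rewrite subr_gt0.
apply: (@schur_core R V x (fun M => M = N)).
- move=> g gd; apply: (@cvg0_root R _ N N0); first by move=> n; exact: cabs_ge0.
  have hp : is_hom_poly N (fun z => g z ^+ N).
    exists (fun v : 'I_N -> V => \prod_(i < N) g (v i)); split; first exact: prod_dual_multi.
    by move=> z; rewrite prod_const_ord.
  have e : (fun n => cabs (g (x n)) ^+ N) = (fun n => cabs ((fun z => g z ^+ N) (x n))).
    by apply: funext => n; rewrite /= cabsX.
  by rewrite e; exact: (hx _ hp).
- move=> y ny wy; have gp := H y ny wy.
  have [P [hP [s [sinc hs]]]] := core p1 hN gp.
  by exists N; split => //; exists P; split => //; exists s.
- by move=> M P -> hP; exact: hx.
Qed.
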